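(* Consider a main effect plan on $n$ runs with factors $F_1,\dots,F_m$ ($m\ge 3$) in which every level of every factor occurs, and fix $i\in\{1,\dots,m\}$. Let $\bar i=\{1,\dots,m+1\}\setminus\{i\}$. (a) $SS_{i;\bar i}=SS_{i;\{m+1\}}$ as functions of $Y\in\mathbb R^n$ if and only if for every $j\in\{1,\dots,m\}\setminus\{i\}$ the incidence matrix $N_{ij}$ satisfies the proportional frequency condition $N_{ij}=r_ir_j'/n$. (b) Suppose $i\le m-1$. Then $SS_{i;\bar i}=SS_{i;\{m,m+1\}}$ as functions of $Y$ if and only if $N_{ij}=N_{im}R_m^{-1}N_{jm}'$ for every $j\in\{1,\dots,m-1\}\setminus\{i\}$.
   Context: Model: $Y=\mathbf 1_n\mu+\sum_{i=1}^m X_i\alpha^i+\epsilon$, where $F_i$ has $a_i$ levels and $X_i$ is the $n\times a_i$ 0-1 design matrix ($(u,t)$ entry $1$ iff $F_i$ is at level $t$ in run $u$); put $X_{m+1}=\mathbf 1_n$. $N_{ij}=X_i'X_j$ is the incidence matrix of $F_i,F_j$ (entry $(s,t)$ = number of runs with $F_i$ at level $s$ and $F_j$ at level $t$), $r_i=X_i'\mathbf 1_n$ is the replication vector of $F_i$, and $R_i=\mathrm{diag}(r_i)$. $P_A=A(A'A)^-A'$ is the orthogonal projector onto the column space of $A$; for $S\subseteq\{1,\dots,m+1\}$, $P_S$ is the projector onto the column space of $[X_j]_{j\in S}$. For $i\notin T$: $C_{i;T}=X_i'(I-P_T)X_i$, $Q_{i;T}=X_i'(I-P_T)Y$, $SS_{i;T}=Q_{i;T}'(C_{i;T})^-Q_{i;T}$.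 *)

(* Defs.v *)
From HB Require Import structures.
From mathcomp Require Import all_boot all_order all_algebra.
Set Implicit Arguments. Unset Strict Implicit. Unset Printing Implicit Defensive.
Import Order.TTheory GRing.Theory Num.Theory.
Local Open Scope ring_scope.

(* The "terms" of the model are indexed by 'I_m.+1: index (lift ord_max k)
   (value k) is factor k (paper's F_{k+1}), and ord_max (value m) is the
   intercept X_{m+1} = 1_n. *)

Definition fac (m : nat) (k : 'I_m) : 'I_m.+1 := lift ord_max k.

Definition nlev (m : nat) (a : 'I_m -> nat) (j : 'I_m.+1) : nat :=
  if unlift ord_max j is Some k then a k else 1%N.

Definition Xd (R : fieldType) (n m : nat) (a : 'I_m -> nat)
  (lev : forall k : 'I_m, 'I_n -> 'I_(a k)) (j : 'I_m.+1)
  : 'M[R]_(n, nlev a j) :=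
  \matrix_(u < n, t < nlev a j)
    (if unlift ord_max j is Some k then nat_of_ord (lev k u) == nat_of_ord t
     else true)%:R.

Definition Nmx (R : fieldType) n m a lev (j k : 'I_m.+1) :=
  (@Xd R n m a lev j)^T *m (@Xd R n m a lev k).

Definition rvec (R : fieldType) n m a lev (j : 'I_m.+1) : 'cV[R]_(nlev a j) :=
  (@Xd R n m a lev j)^T *m const_mx 1.

Definition Rdiag (R : fieldType) n m a lev (j : 'I_m.+1) : 'M[R]_(nlev a j) :=
  diag_mx (@rvec R n m a lev j)^T.

(* Orthogonal projector P_A = A (A'A)^- A', with the generalized inverse
   (A'A)^- taken to be mathcomp's pinvmx (which satisfies B B^- B = B). *)
Definition projmx (R : fieldType) (n p : nat) (A : 'M[R]_(n, p)) : 'M[R]_n :=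
  A *m pinvmx (A^T *m A) *m A^T.

(* P_S: projector onto the column space of [X_j]_{j in S}; the columns of
   the n x n matrix spanS^T span exactly that column space. *)
Definition spanS (R : fieldType) n m a lev (S : {set 'I_m.+1}) : 'M[R]_n :=
  (\sum_(j in S) <<(@Xd R n m a lev j)^T>>)%MS.

Definition PS (R : fieldType) n m a lev (S : {set 'I_m.+1}) : 'M[R]_n :=
  projmx (@spanS R n m a lev S)^T.

Definition Cmx (R : fieldType) n m a lev (i : 'I_m.+1) (T : {set 'I_m.+1}) :=
  (@Xd R n m a lev i)^T *m (1%:M - @PS R n m a lev T) *m (@Xd R n m a lev i).

Definition Qmx (R : fieldType) n m a lev (i : 'I_m.+1) (T : {set 'I_m.+1})
  (Y : 'cV[R]_n) :=
  (@Xd R n m a lev i)^T *m (1%:M - @PS R n m a lev T) *m Y.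

Definition SS (R : fieldType) n m a lev (i : 'I_m.+1) (T : {set 'I_m.+1})
  (Y : 'cV[R]_n) : 'M[R]_1 :=
  (@Qmx R n m a lev i T Y)^T *m pinvmx (@Cmx R n m a lev i T)
    *m (@Qmx R n m a lev i T Y).

(* Main.v *)
Require Import Defs.
From HB Require Import structures.
From mathcomp Require Import all_boot all_order all_algebra.
From mathcomp Require Import zify.
Import Order.TTheory GRing.Theory Num.Theory.
Local Open Scope ring_scope.
Set Implicit Arguments. Unset Strict Implicit. Unset Printing Implicit Defensive.


Lemma sos_eq0 (R : realFieldType) n (v : 'rV[R]_n) : v *m v^T = 0 -> v = 0.
Proof.
move/matrixP/(_ 0 0); rewrite !mxE => H.
have : \sum_j v 0 j ^+ 2 == 0.
  by rewrite -{2}H; apply/eqP; apply: eq_bigr => j _; rewrite mxE expr2.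
rewrite psumr_eq0; last by move=> j _; exact: sqr_ge0.
move/allP => Hall; apply/matrixP => i j; rewrite mxE (ord1 i).
by have := Hall j (mem_index_enum _); rewrite implyTb sqrf_eq0 => /eqP.
Qed.

Lemma sub_AtA (R : realFieldType) n p (A : 'M[R]_(n, p)) : (A <= A^T *m A)%MS.
Proof.
set M := A^T *m A.
have hk : (kermx M <= kermx A^T)%MS.
  apply/sub_kermxP; apply/row_matrixP => i; rewrite row0 row_mul.
  apply: sos_eq0; rewrite trmx_mul trmxK mulmxA -(mulmxA _ A^T) -/M.
  by rewrite -row_mul mulmx_ker row0 mul0mx.
have := mxrankS hk; rewrite !mxrank_ker mxrank_tr => h.
have hMA : (M <= A)%MS by apply: submxMl.
have hrM : (\rank M <= p)%N by apply: rank_leq_row.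
have hrA : (\rank A <= p)%N by rewrite -mxrank_tr; apply: rank_leq_row.
have hle : (\rank A <= \rank M)%N by lia.
have := mxrank_leqif_sup hMA => [[_ <-]].
by apply/eqP; apply/anti_leq; rewrite hle mxrankS.
Qed.

Lemma proj_abs (R : realFieldType) n p (A : 'M[R]_(n, p)) (G : 'M_p) :
  A *m G *m (A^T *m A) = A -> (A^T *m A) *m G *m (A^T *m A) = A^T *m A ->
  [/\ (A *m G *m A^T)^T = A *m G *m A^T, A^T *m (A *m G *m A^T) = A^T
     & (A *m G *m A^T <= A^T)%MS].
Proof.
move eM: (A^T *m A) => M hA hMM.
have hMt : M^T = M by rewrite -eM trmx_mul trmxK.
have hAt : M *m G^T *m A^T = A^T.
  by have := congr1 trmx hA; rewrite trmx_mul hMt trmx_mul mulmxA.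
have e1 : A *m G *m A^T = A *m G^T *m A^T.
  by rewrite -{1}hAt !mulmxA hA.
split.
- by rewrite {1}e1 !trmx_mul !trmxK mulmxA.
- by rewrite !mulmxA eM -{1}hAt !mulmxA hMM hAt.
- by apply: submxMl.
Qed.

Lemma proj_facts (R : realFieldType) n p (A : 'M[R]_(n, p)) :
  [/\ (projmx A)^T = projmx A, A^T *m projmx A = A^T & (projmx A <= A^T)%MS].
Proof.
apply: proj_abs; first by apply: mulmxKpV; apply: sub_AtA.
by apply: mulmxKpV; apply: submx_refl.
Qed.

Lemma proj_idem (R : realFieldType) n p (A : 'M[R]_(n, p)) :
  projmx A *m projmx A = projmx A.
Proof.
have [_ h2 _] := proj_facts A.
by rewrite {1}/projmx -mulmxA h2.
Qed.

Lemma proj_uniq (R : realFieldType) n p (A : 'M[R]_(n, p)) (Q : 'M_n) :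
  Q^T = Q -> (Q <= A^T)%MS -> A^T *m Q = A^T -> projmx A = Q.
Proof.
move=> hQt /submxP [D hD] hfix.
have [h1 h2 /submxP [E hE]] := proj_facts A.
have e1 : Q *m projmx A = Q by rewrite hD -mulmxA h2.
have e2 : projmx A *m Q = projmx A by rewrite hE -mulmxA hfix.
by rewrite -e2 -{1}hQt -h1 -trmx_mul e1 hQt.
Qed.

Lemma proj_eq (R : realFieldType) n p q (A : 'M[R]_(n, p)) (B : 'M[R]_(n, q)) :
  (A^T == B^T)%MS -> projmx A = projmx B.
Proof.
move=> /andP [hAB hBA].
have [h1 h2 h3] := proj_facts B.
apply: proj_uniq => //; first exact: submx_trans h3 hBA.
by move/submxP: hAB => [D ->]; rewrite -mulmxA h2.
Qed.

Lemma proj_eq_inv (R : realFieldType) n p q (A : 'M[R]_(n, p)) (B : 'M[R]_(n, q)) :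
  projmx A = projmx B -> (A^T == B^T)%MS.
Proof.
move=> e.
have [_ hA2 hA3] := proj_facts A; have [_ hB2 hB3] := proj_facts B.
have sA : (A^T <= projmx A)%MS by rewrite -{1}hA2 submxMl.
have sB : (B^T <= projmx B)%MS by rewrite -{1}hB2 submxMl.
apply/andP; split.
  by apply: submx_trans sA _; rewrite e.
by apply: submx_trans sB _; rewrite -e.
Qed.

Lemma proj_zero (R : realFieldType) n p k (A : 'M[R]_(n, p)) (Z : 'M_(k, n)) :
  (Z *m projmx A = 0) <-> (Z *m A = 0).
Proof.
have [h1 h2 _] := proj_facts A.
split => h.
  by rewrite -(trmxK A) -h2 trmx_mul h1 mulmxA h trmxK mul0mx.
by rewrite /projmx !mulmxA h !mul0mx.
Qed.

Lemma quad_zero (R : realFieldType) n (Sm : 'M[R]_n) :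
  Sm^T = Sm -> (forall Y : 'cV_n, Y^T *m Sm *m Y = 0) -> Sm = 0.
Proof.
move=> hS hY.
pose e (u : 'I_n) : 'cV[R]_n := delta_mx u 0.
have key : forall (u v : 'I_n), ((e u)^T *m Sm *m e v) 0 0 = Sm u v.
  by move=> u v; rewrite trmx_delta -rowE -colE !mxE.
have hsym : forall u v, Sm v u = Sm u v by move=> u v; rewrite -{1}hS mxE.
apply/matrixP => u v; rewrite mxE.
have hu := hY (e u); have hv := hY (e v).
have huv := hY (e u + e v).
move/matrixP/(_ 0 0): hu; rewrite key mxE => hu.
move/matrixP/(_ 0 0): hv; rewrite key mxE => hv.
move: huv.
have -> : (e u + e v)^T = (e u)^T + (e v)^T by rewrite linearD.
have key' : forall (x y : 'I_n), (e x)^T *m Sm *m e y = (Sm x y)%:M.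
  by move=> x y; apply/matrixP => p q; rewrite (ord1 p) (ord1 q) key mxE.
rewrite mulmxDr !mulmxDl !key' -!raddfD /= => /matrixP/(_ 0 0).
rewrite !mxE /= mulr1n hu hv hsym add0r addr0.
move/eqP; rewrite -mulr2n mulrn_eq0 /= => /eqP //.
Qed.

Lemma SS_form (R : realFieldType) n m (a : 'I_m -> nat) (lev : forall k : 'I_m, 'I_n -> 'I_(a k)) (i : 'I_m.+1) (T : {set 'I_m.+1}) (Y : 'cV[R]_n) :
  SS lev i T Y = Y^T *m projmx ((1%:M - PS R lev T) *m Xd R lev i) *m Y.
Proof.
set P := PS R lev T.
have [h1 _ _] := proj_facts ((spanS R lev T)^T).
have hP : P^T = P by exact: h1.
have hPP : P *m P = P by exact: proj_idem.
have hIt : (1%:M - P)^T = 1%:M - P by rewrite linearB /= trmx1 hP.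
have hII : (1%:M - P) *m (1%:M - P) = 1%:M - P.
  by rewrite mulmxBl mul1mx mulmxBr mulmx1 hPP subrr subr0.
set X := Xd R lev i.
have eC : Cmx R lev i T = ((1%:M - P) *m X)^T *m ((1%:M - P) *m X).
  by rewrite trmx_mul hIt /Cmx -/P -/X -!mulmxA (mulmxA (1%:M - P)) hII.
have eQ : Qmx lev i T Y = ((1%:M - P) *m X)^T *m Y.
  by rewrite trmx_mul hIt /Qmx -/P -/X.
rewrite /SS eC eQ /projmx trmx_mul trmxK !mulmxA.
done.
Qed.

Lemma SS_eq_iff (R : realFieldType) n m (a : 'I_m -> nat) (lev : forall k : 'I_m, 'I_n -> 'I_(a k))
   (i : 'I_m.+1) (U V : {set 'I_m.+1}) :
  (forall Y : 'cV[R]_n, SS lev i V Y = SS lev i U Y) <->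
  ((((1%:M - PS R lev V) *m Xd R lev i)^T == ((1%:M - PS R lev U) *m Xd R lev i)^T)%MS).
Proof.
split => [h | h Y]; last by rewrite !SS_form (proj_eq h).
apply: proj_eq_inv; apply/eqP; rewrite -subr_eq0; apply/eqP.
apply: quad_zero.
  have [h1 _ _] := proj_facts ((1%:M - PS R lev V) *m Xd R lev i).
  have [h2 _ _] := proj_facts ((1%:M - PS R lev U) *m Xd R lev i).
  by rewrite linearB /= h1 h2.
by move=> Y; rewrite mulmxBr mulmxBl -!SS_form h subrr.
Qed.

Lemma step2g (R : realFieldType) n p q k (AU : 'M[R]_(n, p)) (AV : 'M[R]_(n, q)) (Z : 'M_(k, n)) :
  (AU^T <= AV^T)%MS ->
  ((Z *m (1%:M - projmx AV) == Z *m (1%:M - projmx AU))%MS <->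
   Z *m (1%:M - projmx AU) *m AV = 0).
Proof.
move=> hUV.
have [_ _ hU3] := proj_facts AU; have [_ hV2 _] := proj_facts AV.
have hUV' : projmx AU *m projmx AV = projmx AU.
  by move/submxP: (submx_trans hU3 hUV) => [D hD]; rewrite hD -mulmxA hV2.
have hVV := proj_idem AV.
rewrite -proj_zero.
split => h.
  move/andP: h => [_ /submxP [W hW]].
  by rewrite hW -!mulmxA mulmxBl mul1mx hVV subrr !mulmx0.
have e : Z *m projmx AV = Z *m projmx AU.
  move: h; rewrite mulmxBr mulmx1 mulmxBl -mulmxA hUV'.
  by move/eqP; rewrite subr_eq0 => /eqP.
by rewrite !mulmxBr !mulmx1 e; apply/eqmxP.
Qed.

Lemma span_orth (R : realFieldType) n m (a : 'I_m -> nat) (lev : forall k : 'I_m, 'I_n -> 'I_(a k))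
   (V : {set 'I_m.+1}) k (Z : 'M[R]_(k, n)) :
  Z *m (spanS R lev V)^T = 0 <-> (forall j, j \in V -> Z *m Xd R lev j = 0).
Proof.
split => h.
  move=> j hj.
  have : ((Xd R lev j)^T <= spanS R lev V)%MS.
    by apply: (sumsmx_sup j) => //; rewrite genmxE.
  move/submxP => [D hD].
  by rewrite -(trmxK (Xd R lev j)) hD trmx_mul mulmxA h mul0mx.
have : (spanS R lev V <= spanS R lev V)%MS by apply: submx_refl.
rewrite /spanS; move/sub_sumsmxP => [u ->].
rewrite raddf_sum /= mulmx_sumr big1 // => j hj.
have : (<<(Xd R lev j)^T>> <= (Xd R lev j)^T)%MS by rewrite genmxE.
move/submxP => [D ->].
by rewrite !trmx_mul trmxK !mulmxA h // !mul0mx.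
Qed.

Lemma core (R : realFieldType) n m (a : 'I_m -> nat) (lev : forall k : 'I_m, 'I_n -> 'I_(a k))
   (i0 : 'I_m.+1) (U V : {set 'I_m.+1}) q (Z : 'M[R]_(n, q)) :
  (spanS R lev U <= spanS R lev V)%MS ->
  (spanS R lev U == Z^T)%MS ->
  (Z^T *m Z) \in unitmx ->
  (forall Y : 'cV[R]_n, SS lev i0 V Y = SS lev i0 U Y) <->
  (forall j, j \in V -> Nmx R lev i0 j =
      (Xd R lev i0)^T *m Z *m invmx (Z^T *m Z) *m Z^T *m Xd R lev j).
Proof.
move=> hUV hUZ hunit.
set X := Xd R lev i0.
set Q := Z *m invmx (Z^T *m Z) *m Z^T.
have hPU : PS R lev U = Q.
  apply: proj_uniq; rewrite ?trmxK.
  - rewrite /Q !trmx_mul trmxK trmx_inv trmx_mul trmxK mulmxA //.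
  - apply: submx_trans (submxMl _ _) _; by move/andP: hUZ => [_ ->].
  - move/andP: hUZ => [/submxP [D ->] _].
    by rewrite -mulmxA; congr (D *m _); rewrite /Q !mulmxA (mulmxV hunit) mul1mx.
have htr : forall T : {set 'I_m.+1}, ((1%:M - PS R lev T) *m X)^T = X^T *m (1%:M - PS R lev T).
  move=> T; have [h1 _ _] := proj_facts ((spanS R lev T)^T).
  by rewrite trmx_mul linearB /= trmx1 h1.
rewrite SS_eq_iff !htr.
have := @step2g R n n n _ ((spanS R lev U)^T) ((spanS R lev V)^T) X^T.
rewrite !trmxK => H; rewrite (H hUV) {H}.
change (projmx (spanS R lev U)^T) with (PS R lev U).
rewrite span_orth; split => h j hj; have := h j hj.
  rewrite hPU mulmxBr mulmx1 mulmxBl /Nmx -/X => /eqP; rewrite subr_eq0 => /eqP ->.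
  by rewrite /Q !mulmxA.
rewrite hPU mulmxBr mulmx1 mulmxBl /Nmx -/X => ->.
by rewrite /Q !mulmxA subrr.
Qed.


Lemma nlev_fac m (a : 'I_m -> nat) (k : 'I_m) : nlev a (fac k) = a k.
Proof. by rewrite /nlev /fac liftK. Qed.

Lemma nlev_max m (a : 'I_m -> nat) : nlev a ord_max = 1%N.
Proof. by rewrite /nlev unlift_none. Qed.

Lemma XdE (R : realFieldType) n m (a : 'I_m -> nat) (lev : forall k : 'I_m, 'I_n -> 'I_(a k))
  (k : 'I_m) u t : Xd R lev (fac k) u t = ((lev k u : nat) == t)%:R.
Proof. by rewrite mxE /fac liftK. Qed.

Lemma Xd_maxE (R : realFieldType) n m (a : 'I_m -> nat) (lev : forall k : 'I_m, 'I_n -> 'I_(a k))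
  u t : Xd R lev ord_max u t = 1.
Proof. by rewrite mxE unlift_none. Qed.

Lemma Xd_max_fac (R : realFieldType) n m (a : 'I_m -> nat) (lev : forall k : 'I_m, 'I_n -> 'I_(a k))
  (k : 'I_m) : Xd R lev ord_max = Xd R lev (fac k) *m const_mx 1.
Proof.
apply/matrixP => u t; rewrite Xd_maxE mxE.
have hl : (lev k u < nlev a (fac k))%N by rewrite nlev_fac.
rewrite (bigD1 (Ordinal hl)) //= big1 => [|s hs].
  by rewrite XdE mxE /= eqxx mulr1 addr0.
by move: hs; rewrite XdE -val_eqE /= eq_sym => /negbTE ->; rewrite mul0r.
Qed.

Lemma Nmx_diag (R : realFieldType) n m (a : 'I_m -> nat) (lev : forall k : 'I_m, 'I_n -> 'I_(a k))
  (k : 'I_m) : Nmx R lev (fac k) (fac k) = Rdiag R lev (fac k).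
Proof.
apply/matrixP => s t; rewrite /Rdiag /Nmx !mxE.
have [<-|hst] := eqVneq s t.
  rewrite mulr1n; apply: eq_bigr => u _; rewrite !mxE /fac liftK.
  by rewrite mulr1; case: (_ == _); rewrite ?mul1r ?mul0r.
rewrite mulr0n big1 // => u _; rewrite !mxE /fac liftK.
have [e|] := eqVneq (lev k u : nat) s; last by rewrite mul0r.
by rewrite e val_eqE (negbTE hst) mulr0.
Qed.

Lemma Rdiag_unit (R : realFieldType) n m (a : 'I_m -> nat) (lev : forall k : 'I_m, 'I_n -> 'I_(a k))
  (k : 'I_m) (hocc : forall t : 'I_(a k), exists u, lev k u = t) :
  Rdiag R lev (fac k) \in unitmx.
Proof.
rewrite unitmxE det_diag unitfE; apply/prodf_neq0 => s _; rewrite !mxE.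
under eq_bigr do rewrite !mxE /fac liftK mulr1.
rewrite -natr_sum pnatr_eq0 -lt0n.
have hs : (s < a k)%N by have := ltn_ord s; rewrite {2}nlev_fac.
have [u0 hu0] := hocc (Ordinal hs).
by rewrite (bigD1 u0) //= hu0 eqxx.
Qed.

Lemma spanS_mono (R : realFieldType) n m (a : 'I_m -> nat) (lev : forall k : 'I_m, 'I_n -> 'I_(a k))
  (U V : {set 'I_m.+1}) : U \subset V -> (spanS R lev U <= spanS R lev V)%MS.
Proof.
move=> h; apply/sumsmx_subP => j hj; apply: (sumsmx_sup j); last exact: submx_refl.
exact: (subsetP h).
Qed.

Lemma spanS_eqZ (R : realFieldType) n m (a : 'I_m -> nat) (lev : forall k : 'I_m, 'I_n -> 'I_(a k))
  (U : {set 'I_m.+1}) q (Z : 'M[R]_(n, q)) j0 :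
  j0 \in U -> (Z^T <= (Xd R lev j0)^T)%MS ->
  (forall j, j \in U -> ((Xd R lev j)^T <= Z^T)%MS) -> (spanS R lev U == Z^T)%MS.
Proof.
move=> hj0 h0 h; apply/andP; split.
  by apply/sumsmx_subP => j hj; rewrite genmxE; exact: h.
by apply: submx_trans h0 _; apply: (sumsmx_sup j0) => //; rewrite genmxE.
Qed.

Lemma auto_cond (R : realFieldType) n m (a : 'I_m -> nat) (lev : forall k : 'I_m, 'I_n -> 'I_(a k))
  (i0 j : 'I_m.+1) q (Z : 'M[R]_(n, q)) W :
  Z^T *m Z \in unitmx -> Xd R lev j = Z *m W ->
  Nmx R lev i0 j = (Xd R lev i0)^T *m Z *m invmx (Z^T *m Z) *m Z^T *m Xd R lev j.
Proof.
move=> hu e; rewrite /Nmx e !mulmxA -(mulmxA _ Z^T Z).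
by rewrite -(mulmxA _ (invmx _)) (mulVmx hu) mulmx1.
Qed.


Lemma part_a (R : realFieldType) n m (a : 'I_m -> nat) (lev : forall k : 'I_m, 'I_n -> 'I_(a k))
  (i : 'I_m) (hn : n != 0%N) :
  (forall Y : 'cV[R]_n, SS lev (fac i) ([set: 'I_m.+1] :\ fac i) Y = SS lev (fac i) [set ord_max] Y) <->
  (forall j : 'I_m, j != i -> Nmx R lev (fac i) (fac j)
      = (n%:R)^-1 *: (rvec R lev (fac i) *m (rvec R lev (fac j))^T)).
Proof.
pose Z : 'M[R]_(n, 1) := const_mx 1.
have hZZ : Z^T *m Z = (n%:R)%:M.
  apply/matrixP => s t; rewrite (ord1 s) (ord1 t) !mxE.
  under eq_bigr do rewrite !mxE mulr1.
  by rewrite sumr_const card_ord.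
have hunit : Z^T *m Z \in unitmx.
  by rewrite hZZ unitmxE det_scalar expr1 unitfE pnatr_eq0.
have hmax : Xd R lev ord_max = Z *m (const_mx 1 : 'M_(1, nlev a ord_max)).
  by apply/matrixP => u t; rewrite Xd_maxE !mxE big_ord1 !mxE mulr1.
have hZ : Z = Xd R lev ord_max *m const_mx 1.
  apply/matrixP => u t; rewrite !mxE.
  under eq_bigr do rewrite Xd_maxE mxE mulr1.
  by rewrite sumr_const card_ord nlev_max.
rewrite (@core R n m a lev (fac i) _ _ 1 Z).
- split => h.
  + move=> j hji.
    have := h (fac j); rewrite in_setD1 in_setT andbT (inj_eq lift_inj) hji => /(_ isT) ->.
    rewrite hZZ invmx_scalar mul_mx_scalar /rvec trmx_mul trmx_const -!scalemxAl.
    by rewrite trmxK !mulmxA.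
  + move=> j; rewrite in_setD1 in_setT andbT.
    case: (unliftP ord_max j) => [j' -> | ->] hj.
      rewrite h; last by move: hj; rewrite (inj_eq lift_inj).
      rewrite hZZ invmx_scalar mul_mx_scalar /rvec trmx_mul trmx_const -!scalemxAl.
      by rewrite trmxK !mulmxA.
    exact: auto_cond hunit hmax.
- apply: spanS_mono; apply/subsetP => j; rewrite in_set1 => /eqP ->.
  by rewrite in_setD1 in_setT andbT; exact: neq_lift.
- apply: (spanS_eqZ (j0 := ord_max)); first by rewrite in_set1.
    by rewrite {1}hZ trmx_mul submxMl.
  by move=> j; rewrite in_set1 => /eqP ->; rewrite hmax trmx_mul submxMl.
- exact: hunit.
Qed.

Lemma part_b (R : realFieldType) n m (a : 'I_m -> nat) (lev : forall k : 'I_m, 'I_n -> 'I_(a k))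
  (i k : 'I_m) (hki : k != i) (hocck : forall t : 'I_(a k), exists u, lev k u = t) :
  (forall Y : 'cV[R]_n, SS lev (fac i) ([set: 'I_m.+1] :\ fac i) Y
      = SS lev (fac i) [set fac k; ord_max] Y) <->
  (forall j : 'I_m, j != i -> j != k -> Nmx R lev (fac i) (fac j)
      = Nmx R lev (fac i) (fac k) *m invmx (Rdiag R lev (fac k))
          *m (Nmx R lev (fac j) (fac k))^T).
Proof.
pose Z := Xd R lev (fac k).
have hZZ : Z^T *m Z = Rdiag R lev (fac k) by apply: Nmx_diag.
have hunit : Z^T *m Z \in unitmx by rewrite hZZ; exact: Rdiag_unit.
have hmax : Xd R lev ord_max = Z *m const_mx 1 by apply: Xd_max_fac.
rewrite (@core R n m a lev (fac i) _ _ _ Z).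
- split => h.
  + move=> j hji hjk.
    have := h (fac j); rewrite in_setD1 in_setT andbT (inj_eq lift_inj) hji => /(_ isT) ->.
    by rewrite hZZ /Nmx trmx_mul trmxK !mulmxA.
  + move=> j; rewrite in_setD1 in_setT andbT.
    case: (unliftP ord_max j) => [j' -> | ->] hj; last exact: auto_cond hunit hmax.
    have hj' : j' != i by move: hj; rewrite (inj_eq lift_inj).
    have [ejk|hjk] := eqVneq j' k.
      by rewrite ejk; apply: (@auto_cond _ _ _ _ _ _ _ _ Z 1%:M hunit); rewrite mulmx1.
    by rewrite h // hZZ /Nmx trmx_mul trmxK !mulmxA.
- apply: spanS_mono; apply/subsetP => j; rewrite in_set2 => /orP [] /eqP ->;
    rewrite in_setD1 in_setT andbT.
    by rewrite (inj_eq lift_inj).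
  exact: neq_lift.
- apply: (spanS_eqZ (j0 := fac k)); first by rewrite in_set2 eqxx.
    exact: submx_refl.
  move=> j; rewrite in_set2 => /orP [] /eqP ->; first exact: submx_refl.
  by rewrite hmax trmx_mul submxMl.
- exact: hunit.
Qed.

Lemma part_a0 (R : realFieldType) m (a : 'I_m -> nat) (lev : forall k : 'I_m, 'I_0 -> 'I_(a k))
  (i : 'I_m) :
  (forall Y : 'cV[R]_0, SS lev (fac i) ([set: 'I_m.+1] :\ fac i) Y = SS lev (fac i) [set ord_max] Y) <->
  (forall j : 'I_m, j != i -> Nmx R lev (fac i) (fac j)
      = (0%:R)^-1 *: (rvec R lev (fac i) *m (rvec R lev (fac j))^T)).
Proof.
split => _.
  move=> j _; rewrite /Nmx /rvec.
  rewrite [Xd R lev (fac i)]flatmx0 [Xd R lev (fac j)]flatmx0.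
  by rewrite !(trmx0, mul0mx, mulmx0, scaler0).
by move=> Y; rewrite [Y]flatmx0 /SS /Qmx !(mulmx0, trmx0, mul0mx).
Qed.

Unset Implicit Arguments.

Theorem theorem4p4 (R : realFieldType) (n m : nat) (a : 'I_m -> nat)
  (lev : forall k : 'I_m, 'I_n -> 'I_(a k))
  (hm : (3 <= m)%N)
  (hocc : forall (k : 'I_m) (t : 'I_(a k)), exists u : 'I_n, lev k u = t)
  (i : 'I_m) :
  let ibar : {set 'I_m.+1} := [set: 'I_m.+1] :\ fac i in
  let fm : 'I_m.+1 := inord m.-1 in
  ((forall Y : 'cV[R]_n,
      SS lev (fac i) ibar Y = SS lev (fac i) [set ord_max] Y)
   <->
   (forall j : 'I_m, j != i ->
      Nmx R lev (fac i) (fac j)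
      = (n%:R)^-1 *: (rvec R lev (fac i) *m (rvec R lev (fac j))^T)))
  /\
  ((i.+1 < m)%N ->
   ((forall Y : 'cV[R]_n,
      SS lev (fac i) ibar Y = SS lev (fac i) [set fm; ord_max] Y)
    <->
    (forall j : 'I_m, j != i -> (j.+1 < m)%N ->
      Nmx R lev (fac i) (fac j)
      = Nmx R lev (fac i) fm *m invmx (Rdiag R lev fm)
          *m (Nmx R lev (fac j) fm)^T))).
Proof.
move=> ibar fm; split.
  move: lev hocc; case: n => [|n'] lev hocc; first exact: part_a0.
  exact: part_a.
move=> hlt.
have hkm : (m.-1 < m)%N by rewrite ltn_predL; lia.
pose km : 'I_m := Ordinal hkm.
have hfm : fm = fac km.
  apply: val_inj; rewrite /= inordK; last by rewrite ltnS leq_pred.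
  by rewrite /bump leqNgt hkm.
have hkmv : (km : nat) = (m - 1)%N by rewrite /= subn1.
have hki : km != i.
  by apply/eqP => e; have := congr1 (@nat_of_ord m) e; rewrite hkmv; clear -hlt; lia.
clearbody fm; subst fm.
rewrite /ibar; apply: (iff_trans (@part_b R n m a lev i km hki (hocc km))).
split => h j hji hj.
  apply: h => //; apply/eqP => e; have := congr1 (@nat_of_ord m) e; rewrite hkmv; clear -hj; lia.
apply: h => //; have : (j : nat) != km by rewrite val_eqE.
rewrite hkmv => /eqP hne; have hj' := ltn_ord j; clear -hne hj'; lia.
Qed.
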